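(* Let $U\subseteq\mathbb{C}$ be open and connected with $U\cap\mathbb{R}$ containing an interval, let $f \in \operatorname{Hol}(U, \mathbb{C}_+)$, and let $\varphi(\lambda) = a\lambda + b$ with $a > 0$ and $b \in \mathbb{R}$. Then $\varphi \circ f \in \operatorname{Hol}(U, \mathbb{C}_+)$ and \[ \mathcal{B}[\varphi \circ f](x, y) = a\,\mathcal{B}[f](a\,x,\; y - b\,x) + b. \] Equivalently, $\mathcal{B}[\varphi \circ f] = \varphi \circ \mathcal{B}[f] \circ T_\varphi$ with $T_\varphi(x,y) = (ax,\, y - bx)$, and $\Omega_{\varphi \circ f} = T_\varphi^{-1}(\Omega_f) = \{(x,y) : (ax, y-bx) \in \Omega_f\}$.
   Context: $\mathbb{C}_+$ is the upper half-plane and $\operatorname{Hol}(U,\mathbb{C}_+)$ the set of holomorphic functions $U\to\mathbb{C}_+$. The Burgers transform $\mathcal{B}[f]\colon\Omega_f\to\mathbb{C}_+$ is defined implicitly by $\mathcal{B}[f](x,y) = f(y - \mathcal{B}[f](x,y)\, x)$, where $\Omega_f \subseteq \mathbb{R}^2$ is the maximal open set on which this equation admits a unique $C^1$ solution with positive imaginary part. *)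

(* Defs.v *)
From Stdlib Require Import Reals.
From Coquelicot Require Import Coquelicot.
Open Scope R_scope.

Definition UHP (z : C) : Prop := 0 < Im z.

Definition openC (U : C -> Prop) : Prop := @open C_UniformSpace U.

Definition connectedC (U : C -> Prop) : Prop :=
  (exists z, U z) /\
  ~ (exists A B : C -> Prop, openC A /\ openC B /\
       (forall z, U z -> A z \/ B z) /\
       (forall z, U z -> A z -> B z -> False) /\
       (exists z, U z /\ A z) /\ (exists z, U z /\ B z)).

Definition real_trace_has_interval (U : C -> Prop) : Prop :=
  exists c d : R, c < d /\ forall t : R, c < t < d -> U (RtoC t).

Definition Hol_UHP (U : C -> Prop) (f : C -> C) : Prop :=
  forall z, U z -> @ex_derive C_AbsRing C_NormedModule f z /\ UHP (f z).

Definition openR2 (W : R * R -> Prop) : Prop :=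
  @open (prod_UniformSpace R_UniformSpace R_UniformSpace) W.

Definition dx (u : R * R -> R) (p : R * R) : R := Derive (fun t => u (t, snd p)) (fst p).
Definition dy (u : R * R -> R) (p : R * R) : R := Derive (fun t => u (fst p, t)) (snd p).

Definition C1r_on (W : R * R -> Prop) (u : R * R -> R) : Prop :=
  forall p, W p ->
    ex_derive (fun t => u (t, snd p)) (fst p) /\
    ex_derive (fun t => u (fst p, t)) (snd p) /\
    @continuous (prod_UniformSpace R_UniformSpace R_UniformSpace) R_UniformSpace (dx u) p /\
    @continuous (prod_UniformSpace R_UniformSpace R_UniformSpace) R_UniformSpace (dy u) p.

Definition C1_on (W : R * R -> Prop) (g : R * R -> C) : Prop :=
  C1r_on W (fun p => Re (g p)) /\ C1r_on W (fun p => Im (g p)).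

Definition burgers_sol (U : C -> Prop) (f : C -> C) (W : R * R -> Prop)
    (g : R * R -> C) : Prop :=
  C1_on W g /\
  forall p, W p ->
    UHP (g p) /\
    U (RtoC (snd p) - g p * RtoC (fst p))%C /\
    g p = f (RtoC (snd p) - g p * RtoC (fst p))%C.

Definition burgers_unique_on (U : C -> Prop) (f : C -> C) (W : R * R -> Prop) : Prop :=
  openR2 W /\
  (exists g, burgers_sol U f W g) /\
  (forall g1 g2, burgers_sol U f W g1 -> burgers_sol U f W g2 ->
     forall p, W p -> g1 p = g2 p).

(** Om is a maximal open set (w.r.t. inclusion) on which the equation admits a
    unique C^1 solution with positive imaginary part: this is Ω_f; the
    Burgers transform B[f] is then the (unique) solution on Om. *)
Definition burgers_domain (U : C -> Prop) (f : C -> C) (Om : R * R -> Prop) : Prop :=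
  burgers_unique_on U f Om /\
  forall W, burgers_unique_on U f W -> (forall p, Om p -> W p) -> forall p, W p -> Om p.

Definition is_burgers (U : C -> Prop) (f : C -> C) (Om : R * R -> Prop)
    (B : R * R -> C) : Prop :=
  burgers_domain U f Om /\ burgers_sol U f Om B.

(* Main.v *)
Require Import Defs.
From Stdlib Require Import Reals Lra FunctionalExtensionality PropExtensionality.
From Coquelicot Require Import Coquelicot.
Open Scope R_scope.

Lemma between_abs (x s c : R) : Rmin x s <= c <= Rmax x s -> Rabs (c - x) <= Rabs (s - x).
Proof.
  intros [H1 H2]. unfold Rmin, Rmax in *.
  destruct (Rle_dec x s); split_Rabs; lra.
Qed.

Lemma diff_C1 (F : R -> R -> R) x y :
  locally_2d (fun s t => ex_derive (fun z => F z t) s) x y ->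
  continuity_2d_pt (fun s t => Derive (fun z => F z t) s) x y ->
  ex_derive (fun z => F x z) y ->
  differentiable_pt_lim F x y (Derive (fun z => F z y) x) (Derive (fun z => F x z) y).
Proof.
  intros [d3 Hex] Hc Hy eps.
  assert (He2 : 0 < eps / 2) by (destruct eps; simpl; lra).
  destruct (Hc (mkposreal _ He2)) as [d2 Hd2].
  pose proof (Derive_correct _ _ Hy) as Hy'.
  apply is_derive_Reals in Hy'.
  destruct (Hy' _ He2) as [d1 Hd1].
  assert (Hd : 0 < Rmin d1 (Rmin d2 d3)).
  { destruct d1 as [d1 p1], d2 as [d2 p2], d3 as [d3 p3]; simpl.
    repeat apply Rmin_case; lra. }
  exists (mkposreal _ Hd). intros s t Hs Ht. simpl in Hs, Ht.
  assert (Hs1 : Rabs (s - x) < d2) by (eapply Rlt_le_trans; [exact Hs| ]; 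
     eapply Rle_trans; [apply Rmin_r|apply Rmin_l]).
  assert (Hs3 : Rabs (s - x) < d3) by (eapply Rlt_le_trans; [exact Hs| ]; 
     eapply Rle_trans; [apply Rmin_r|apply Rmin_r]).
  assert (Ht1 : Rabs (t - y) < d1) by (eapply Rlt_le_trans; [exact Ht| ]; apply Rmin_l).
  assert (Ht2 : Rabs (t - y) < d2) by (eapply Rlt_le_trans; [exact Ht| ]; 
     eapply Rle_trans; [apply Rmin_r|apply Rmin_l]).
  assert (Ht3 : Rabs (t - y) < d3) by (eapply Rlt_le_trans; [exact Ht| ]; 
     eapply Rle_trans; [apply Rmin_r|apply Rmin_r]).
  assert (P2 : Rabs (F x t - F x y - Derive (fun z => F x z) y * (t - y)) <= eps/2 * Rabs (t - y)).
  { destruct (Req_dec t y) as [->|Hne].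
    - replace (F x y - F x y - Derive (fun z => F x z) y * (y - y)) with 0 by ring.
      rewrite Rabs_R0, Rminus_diag, Rabs_R0. lra.
    - assert (Hh : t - y <> 0) by lra.
      specialize (Hd1 (t - y) Hh Ht1).
      replace (y + (t - y)) with t in Hd1 by ring.
      replace (F x t - F x y - Derive (fun z => F x z) y * (t - y)) with
        ((t - y) * ((F x t - F x y) / (t - y) - Derive (fun z => F x z) y)) by (field; exact Hh).
      rewrite Rabs_mult. rewrite Rmult_comm. apply Rmult_le_compat_r; [apply Rabs_pos|].
      simpl in Hd1. lra. }
  assert (P1 : Rabs (F s t - F x t - Derive (fun z => F z y) x * (s - x)) <= eps/2 * Rabs (s - x)).
  { destruct (MVT_gen (fun z => F z t) x s (fun z => Derive (fun z' => F z' t) z)) as [c [Hc1 Hc2]].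
    - intros z Hz. apply Derive_correct. apply Hex; [|exact Ht3].
      apply Rle_lt_trans with (2 := Hs3). apply between_abs. lra.
    - intros z Hz. apply continuity_pt_filterlim. apply (ex_derive_continuous (K:=R_AbsRing) (V:=R_NormedModule) (fun z => F z t)).
      apply Hex; [|exact Ht3].
      apply Rle_lt_trans with (2 := Hs3). apply between_abs. lra.
    - simpl in Hc2. rewrite Hc2.
      replace (Derive (fun z' => F z' t) c * (s - x) - Derive (fun z => F z y) x * (s - x))
        with ((Derive (fun z' => F z' t) c - Derive (fun z => F z y) x) * (s - x)) by ring.
      rewrite Rabs_mult. apply Rmult_le_compat_r; [apply Rabs_pos|].
      left. apply (Hd2 c t).
      + apply Rle_lt_trans with (2 := Hs1). apply between_abs. exact Hc1.
      + exact Ht2. }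
  replace (F s t - F x y - (Derive (fun z => F z y) x * (s - x) + Derive (fun z => F x z) y * (t - y)))
    with ((F s t - F x t - Derive (fun z => F z y) x * (s - x)) +
          (F x t - F x y - Derive (fun z => F x z) y * (t - y))) by ring.
  eapply Rle_trans; [apply Rabs_triang|].
  pose proof (Rmax_l (Rabs (s - x)) (Rabs (t - y))).
  pose proof (Rmax_r (Rabs (s - x)) (Rabs (t - y))).
  destruct eps as [e pe]; simpl in *. nra.
Qed.

Lemma T_loc a b x y (P : R -> R -> Prop) : 0 < a ->
  locally_2d P (a*x) (y - b*x) -> locally_2d (fun s t => P (a*s) (t - b*s)) x y.
Proof.
  intros Ha [d Hd].
  assert (Hk : 0 < a + Rabs b + 1) by (pose proof (Rabs_pos b); lra).
  assert (Hd' : 0 < d / (a + Rabs b + 1)) by (apply Rdiv_lt_0_compat; [apply cond_pos|lra]).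
  exists (mkposreal _ Hd'). intros s t Hs Ht. simpl in Hs, Ht.
  assert (E : d / (a + Rabs b + 1) * (a + Rabs b + 1) = d) by (field; lra).
  pose proof (Rabs_pos b). pose proof (Rabs_pos (s - x)). pose proof (Rabs_pos (t - y)).
  apply Hd.
  - replace (a*s - a*x) with (a*(s-x)) by ring. rewrite Rabs_mult, (Rabs_pos_eq a) by lra.
    nra.
  - replace (t - b*s - (y - b*x)) with ((t - y) + (-b) * (s - x)) by ring.
    eapply Rle_lt_trans; [apply Rabs_triang|]. rewrite Rabs_mult, Rabs_Ropp.
    nra.
Qed.

Lemma T_cont a b (p : R * R) : 0 < a ->
  @filterlim (R*R) (R*R) (fun q : R*R => (a * fst q, snd q - b * fst q))
    (@locally (prod_UniformSpace R_UniformSpace R_UniformSpace) p)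
    (@locally (prod_UniformSpace R_UniformSpace R_UniformSpace) (a * fst p, snd p - b * fst p)).
Proof.
  intros Ha. destruct p as [x y]. simpl. intros P HP. unfold filtermap.
  apply (proj1 (locally_2d_locally (fun s t => P (a*s, t - b*s)) x y)).
  apply (T_loc a b x y (fun s t => P (s, t))); [exact Ha|].
  apply (proj2 (locally_2d_locally (fun s t => P (s, t)) _ _)).
  eapply filter_imp; [|exact HP]. intros [s t] H; exact H.
Qed.

Lemma open_T (W : R*R -> Prop) a b : 0 < a -> openR2 W ->
  openR2 (fun p => W (a * fst p, snd p - b * fst p)).
Proof.
  intros Ha HW. unfold openR2.
  apply (open_comp (fun p : R*R => (a * fst p, snd p - b * fst p)) W).
  - intros p _. apply T_cont; exact Ha.
  - exact HW.
Qed.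

Lemma open_loc2d (W : R*R -> Prop) X Y : openR2 W -> W (X, Y) ->
  locally_2d (fun s t => W (s, t)) X Y.
Proof.
  intros HW HXY. apply (proj2 (locally_2d_locally (fun s t => W (s, t)) _ _)).
  eapply filter_imp; [|exact (HW _ HXY)]. intros [s t] H; exact H.
Qed.

Lemma diff_W (W : R*R -> Prop) u X Y : openR2 W -> C1r_on W u -> W (X, Y) ->
  differentiable_pt_lim (fun s t => u (s, t)) X Y (dx u (X, Y)) (dy u (X, Y)).
Proof.
  intros HW Hu HXY.
  apply diff_C1.
  - destruct (open_loc2d W X Y HW HXY) as [d Hd]. exists d. intros s t Hs Ht.
    exact (proj1 (Hu (s, t) (Hd s t Hs Ht))).
  - apply continuity_2d_pt_filterlim. exact (proj1 (proj2 (proj2 (Hu _ HXY)))).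
  - exact (proj1 (proj2 (Hu _ HXY))).
Qed.

Lemma dpl_affine g x l c d : derivable_pt_lim g x l ->
  derivable_pt_lim (fun t => c * g t + d) x (c * l).
Proof.
  intros H. replace (c*l) with (c*l + 0) by ring.
  apply (derivable_pt_lim_plus (fun t => c * g t) (fun _ => d)).
  - apply (derivable_pt_lim_scal g). exact H.
  - apply derivable_pt_lim_const.
Qed.

Lemma T_dx (W : R*R -> Prop) u a b c d x y : openR2 W -> C1r_on W u -> W (a*x, y - b*x) ->
  is_derive (fun t => c * u (a*t, y - b*t) + d) x
    (c * (dx u (a*x, y - b*x) * a + dy u (a*x, y - b*x) * (- b))).
Proof.
  intros HW Hu Hp. apply is_derive_Reals. apply dpl_affine.
  apply (derivable_pt_lim_comp_2d (fun s t => u (s, t)) (fun t => a*t) (fun t => y - b*t)).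
  - exact (diff_W W u _ _ HW Hu Hp).
  - apply is_derive_Reals. auto_derive; [exact I|ring].
  - apply is_derive_Reals. auto_derive; [exact I|ring].
Qed.

Lemma T_dy (W : R*R -> Prop) u a b c d x y : openR2 W -> C1r_on W u -> W (a*x, y - b*x) ->
  is_derive (fun t => c * u (a*x, t - b*x) + d) y
    (c * (dx u (a*x, y - b*x) * 0 + dy u (a*x, y - b*x) * 1)).
Proof.
  intros HW Hu Hp. apply is_derive_Reals. apply dpl_affine.
  apply (derivable_pt_lim_comp_2d (fun s t => u (s, t)) (fun _ => a*x) (fun t => t - b*x)).
  - exact (diff_W W u _ _ HW Hu Hp).
  - apply is_derive_Reals. auto_derive; [exact I|ring].
  - apply is_derive_Reals. auto_derive; [exact I|ring].
Qed.

Lemma cont_G (W : R*R -> Prop) u a b c k1 k2 p : 0 < a -> C1r_on W u ->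
  W (a * fst p, snd p - b * fst p) ->
  @continuous (prod_UniformSpace R_UniformSpace R_UniformSpace) R_UniformSpace
    (fun q => c * (dx u (a * fst q, snd q - b * fst q) * k1 + dy u (a * fst q, snd q - b * fst q) * k2)) p.
Proof.
  intros Ha Hu Hp.
  destruct (Hu _ Hp) as [_ [_ [C1 C2]]].
  apply (continuous_mult (K:=R_AbsRing)). apply continuous_const.
  apply (continuous_plus (K:=R_AbsRing) (V:=R_NormedModule)).
  - apply (continuous_mult (K:=R_AbsRing)); [|apply continuous_const].
    apply (continuous_comp (fun q : R*R => (a * fst q, snd q - b * fst q)) (dx u)).
    + apply T_cont; exact Ha.
    + exact C1.
  - apply (continuous_mult (K:=R_AbsRing)); [|apply continuous_const].
    apply (continuous_comp (fun q : R*R => (a * fst q, snd q - b * fst q)) (dy u)).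
    + apply T_cont; exact Ha.
    + exact C2.
Qed.

Lemma C1r_T (W : R*R -> Prop) u a b c d : 0 < a -> openR2 W -> C1r_on W u ->
  C1r_on (fun p => W (a * fst p, snd p - b * fst p))
         (fun p => c * u (a * fst p, snd p - b * fst p) + d).
Proof.
  intros Ha HW Hu [x y] Hp. simpl in Hp.
  assert (HWT := open_T W a b Ha HW).
  split; [|split; [|split]].
  - eexists. exact (T_dx W u a b c d x y HW Hu Hp).
  - eexists. exact (T_dy W u a b c d x y HW Hu Hp).
  - apply (continuous_ext_loc _
      (fun q => c * (dx u (a * fst q, snd q - b * fst q) * a + dy u (a * fst q, snd q - b * fst q) * (- b)))).
    + eapply filter_imp; [|exact (HWT (x,y) Hp)].
      intros [s t] Hst. simpl in Hst. unfold dx. simpl.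
      symmetry. apply is_derive_unique. exact (T_dx W u a b c d s t HW Hu Hst).
    + apply (cont_G W u a b c _ _ (x,y) Ha Hu Hp).
  - apply (continuous_ext_loc _
      (fun q => c * (dx u (a * fst q, snd q - b * fst q) * 0 + dy u (a * fst q, snd q - b * fst q) * 1))).
    + eapply filter_imp; [|exact (HWT (x,y) Hp)].
      intros [s t] Hst. simpl in Hst. unfold dy. simpl.
      symmetry. apply is_derive_unique. exact (T_dy W u a b c d s t HW Hu Hst).
    + apply (cont_G W u a b c _ _ (x,y) Ha Hu Hp).
Qed.

Lemma C1r_ext (W : R*R -> Prop) u w : (forall p, u p = w p) -> C1r_on W u -> C1r_on W w.
Proof.
  intros E H. replace w with u; [exact H|]. apply functional_extensionality; exact E.
Qed.

Lemma key_id (a b x y : R) (G : C) :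
  (RtoC y - (RtoC a * G + RtoC b) * RtoC x = RtoC (y - b*x) - G * RtoC (a*x))%C.
Proof. destruct G as [g1 g2]. unfold Cminus, Cplus, Cmult, Copp, RtoC; simpl; f_equal; ring. Qed.

Lemma sol_T U f (W : R*R -> Prop) g a b : 0 < a -> openR2 W -> burgers_sol U f W g ->
  burgers_sol U (fun z => (RtoC a * f z + RtoC b)%C)
    (fun p => W (a * fst p, snd p - b * fst p))
    (fun p => (RtoC a * g ((a * fst p)%R, (snd p - b * fst p)%R) + RtoC b)%C).
Proof.
  intros Ha HW [[HR HI] Hs]. split.
  - split.
    + apply C1r_ext with (u := fun p => a * Re (g (a * fst p, snd p - b * fst p)) + b).
      * intros p. destruct (g (a * fst p, snd p - b * fst p)) as [g1 g2]. simpl. ring.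
      * apply (C1r_T W (fun p => Re (g p)) a b a b Ha HW HR).
    + apply C1r_ext with (u := fun p => a * Im (g (a * fst p, snd p - b * fst p)) + 0).
      * intros p. destruct (g (a * fst p, snd p - b * fst p)) as [g1 g2]. simpl. ring.
      * apply (C1r_T W (fun p => Im (g p)) a b a 0 Ha HW HI).
  - intros [x y] Hp. simpl in Hp. destruct (Hs _ Hp) as [HU [HUa HE]]. simpl in HU, HUa, HE |- *.
    split; [|split].
    + unfold UHP in *. destruct (g (a * x, y - b * x)) as [g1 g2]. simpl in *. nra.
    + rewrite key_id. exact HUa.
    + rewrite key_id. rewrite <- HE. reflexivity.
Qed.

Lemma phi_inv1 a b z : 0 < a -> (RtoC (/a) * (RtoC a * z + RtoC b) + RtoC (- b / a))%C = z.
Proof. intros Ha. destruct z as [z1 z2]. unfold Cminus, Cplus, Cmult, Copp, RtoC; simpl; f_equal; field; lra. Qed.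

Lemma phi_inv2 a b z : 0 < a -> (RtoC a * (RtoC (/a) * z + RtoC (- b / a)) + RtoC b)%C = z.
Proof. intros Ha. destruct z as [z1 z2]. unfold Cminus, Cplus, Cmult, Copp, RtoC; simpl; f_equal; field; lra. Qed.

Lemma T_inv1 a b (p : R*R) : 0 < a ->
  (a * fst (/a * fst p, snd p - (- b / a) * fst p),
   snd (/a * fst p, snd p - (- b / a) * fst p) - b * fst (/a * fst p, snd p - (- b / a) * fst p)) = p.
Proof. intros Ha. destruct p as [x y]. simpl. f_equal; field; lra. Qed.

Lemma T_inv2 a b (p : R*R) : 0 < a ->
  (/a * fst (a * fst p, snd p - b * fst p),
   snd (a * fst p, snd p - b * fst p) - (- b / a) * fst (a * fst p, snd p - b * fst p)) = p.
Proof. intros Ha. destruct p as [x y]. simpl. f_equal; field; lra. Qed.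

Lemma fun_inv1 (f : C -> C) a b : 0 < a ->
  (fun z => RtoC (/a) * (RtoC a * f z + RtoC b) + RtoC (- b / a))%C = f.
Proof. intros Ha. apply functional_extensionality; intros z. apply phi_inv1; exact Ha. Qed.

Lemma set_inv1 (W : R*R -> Prop) a b : 0 < a ->
  (fun q : R*R => W (a * fst (/a * fst q, snd q - (- b / a) * fst q),
        snd (/a * fst q, snd q - (- b / a) * fst q) - b * fst (/a * fst q, snd q - (- b / a) * fst q))) = W.
Proof. intros Ha. apply functional_extensionality; intros q. cbv beta. rewrite (T_inv1 a b q Ha). reflexivity. Qed.

Lemma unique_T U f (W : R*R -> Prop) a b : 0 < a -> burgers_unique_on U f W ->
  burgers_unique_on U (fun z => (RtoC a * f z + RtoC b)%C)
    (fun p => W (a * fst p, snd p - b * fst p)).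
Proof.
  intros Ha [HW [[g Hg] Hu]].
  assert (Ha' : 0 < / a) by (apply Rinv_0_lt_compat; exact Ha).
  split; [apply open_T; assumption|split].
  - eexists. apply sol_T; eassumption.
  - intros h1 h2 H1 H2 p Hp.
    pose proof (open_T W a b Ha HW) as HWT.
    pose proof (sol_T _ _ _ _ (/a) (- b / a) Ha' HWT H1) as G1.
    pose proof (sol_T _ _ _ _ (/a) (- b / a) Ha' HWT H2) as G2.
    cbv beta in G1, G2. rewrite (fun_inv1 f a b Ha), (set_inv1 W a b Ha) in G1, G2.
    pose proof (Hu _ _ G1 G2 _ Hp) as E. cbv beta in E.
    rewrite (T_inv2 a b p Ha) in E.
    rewrite <- (phi_inv2 a b (h1 p) Ha), <- (phi_inv2 a b (h2 p) Ha).
    rewrite E. reflexivity.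
Qed.

Lemma domain_T U f (Om : R*R -> Prop) a b : 0 < a -> burgers_domain U f Om ->
  burgers_domain U (fun z => (RtoC a * f z + RtoC b)%C)
    (fun p => Om (a * fst p, snd p - b * fst p)).
Proof.
  intros Ha [Hu Hmax].
  assert (Ha' : 0 < / a) by (apply Rinv_0_lt_compat; exact Ha).
  split; [apply unique_T; assumption|].
  intros W HW Hsub q Hq.
  pose proof (unique_T _ _ _ (/a) (- b / a) Ha' HW) as HW'.
  cbv beta in HW'. rewrite (fun_inv1 f a b Ha) in HW'.
  assert (Hsub' : forall p, Om p -> W (/a * fst p, snd p - (- b / a) * fst p)).
  { intros p Hp. apply Hsub. rewrite (T_inv1 a b p Ha). exact Hp. }
  pose proof (Hmax _ HW' Hsub' (a * fst q, snd q - b * fst q)) as H.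
  apply H. rewrite (T_inv2 a b q Ha). exact Hq.
Qed.

Lemma exd_affine : forall (f : C -> C) (z : C) (a b : R), @ex_derive C_AbsRing C_NormedModule f z ->
 @ex_derive C_AbsRing C_NormedModule (fun t => (RtoC a * f t + RtoC b)%C) z.
Proof.
  intros f z a b [l Hl]. exists (RtoC a * l)%C. unfold is_derive in *.
  apply (filterdiff_ext_lin (K:=C_AbsRing) (U:=AbsRing_NormedModule C_AbsRing) (V:=C_NormedModule) _ (fun y : C => plus (scal (RtoC a) (scal y l)) (@zero C_NormedModule))).
  - apply (filterdiff_plus_fct (K:=C_AbsRing) (U:=AbsRing_NormedModule C_AbsRing) (V:=C_NormedModule) (fun t => scal (RtoC a) (f t)) (fun _ => RtoC b)).
    + apply (filterdiff_scal_r_fct (K:=C_AbsRing) (U:=AbsRing_NormedModule C_AbsRing) (V:=C_NormedModule) (RtoC a) f (fun y => scal y l)); [exact Cmult_comm | exact Hl].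
    + apply filterdiff_const.
  - intros y. change ((RtoC a * (y * l) + RtoC 0)%C = (y * (RtoC a * l))%C).
    destruct y, l. unfold Cplus, Cmult, RtoC; simpl; f_equal; ring.
Qed.

Theorem proposition6p4 (U : C -> Prop) (f : C -> C) (a b : R) :
  openC U -> connectedC U -> real_trace_has_interval U ->
  Hol_UHP U f -> 0 < a ->
  let phi := fun l : C => (RtoC a * l + RtoC b)%C in
  let T := fun p : R * R => (a * fst p, snd p - b * fst p) in
  Hol_UHP U (fun z => phi (f z)) /\
  (forall Om : R * R -> Prop,
     burgers_domain U f Om <-> burgers_domain U (fun z => phi (f z)) (fun p => Om (T p))) /\
  (forall (Om : R * R -> Prop) (B : R * R -> C),
     is_burgers U f Om B ->
     is_burgers U (fun z => phi (f z)) (fun p => Om (T p)) (fun p => phi (B (T p)))).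
Proof.
  intros _ _ _ Hf Ha phi T. subst phi T. cbv beta.
  assert (Ha' : 0 < / a) by (apply Rinv_0_lt_compat; exact Ha).
  split; [|split].
  - intros z Hz. destruct (Hf z Hz) as [Hd Hi]. split.
    + apply exd_affine. exact Hd.
    + unfold UHP in *. destruct (f z) as [z1 z2]. simpl in *. nra.
  - intros Om. split.
    + apply domain_T; exact Ha.
    + intros H. pose proof (domain_T _ _ _ (/a) (- b / a) Ha' H) as H'.
      cbv beta in H'. rewrite (fun_inv1 f a b Ha), (set_inv1 Om a b Ha) in H'. exact H'.
  - intros Om B [Hd Hs]. split.
    + apply domain_T; assumption.
    + apply sol_T; [exact Ha| exact (proj1 (proj1 Hd)) | exact Hs].
Qed.
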